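(* Consider an iteration $t$ of the NSGA-II optimizing \textsc{OneMinMax} (any population size $N$, any offspring generation). All individuals of $R_t$ have rank one, and crowding distances are computed with respect to $R_t$. Let $v_1^{\min}=\min\{f_1(x):x\in R_t\}$, $v_1^{\max}=\max\{f_1(x):x\in R_t\}$, and assume $v_1^{\max}>v_1^{\min}$. Let $V=f(R_t)$, $V^+_{\mathrm{in}}=\{(v_1,v_2)\in V:\exists y\in R_t,\ f(y)=(v_1+1,v_2-1)\}$ and $V^-_{\mathrm{in}}=\{(v_1,v_2)\in V:\exists y\in R_t,\ f(y)=(v_1-1,v_2+1)\}$. Then for every $(v_1,v_2)\in V\setminus(V^+_{\mathrm{in}}\cap V^-_{\mathrm{in}})$ there is an individual $x\in R_t$ with $f(x)=(v_1,v_2)$ and $\mathrm{cDis}(x)\ge \frac{2}{v_1^{\max}-v_1^{\min}}$ (regardless of how ties are broken in the sorting steps of the crowding distance computation).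
   Context: Search space $\{0,1\}^n$; objective $f=(f_1,f_2)$, both maximized. Populations are multisets of bit strings; $f(P)=\{f(x):x\in P\}$. Crowding distance of the individuals of a set $S$ (computed with respect to $S$): start with $\mathrm{cDis}(x)=0$ for all $x\in S$; for each $i\in\{1,2\}$, sort $S$ in ascending $f_i$-value as $S_{i.1},\dots,S_{i.|S|}$ (ties broken arbitrarily), set $\mathrm{cDis}(S_{i.1})=\mathrm{cDis}(S_{i.|S|})=+\infty$, and for $2\le j\le |S|-1$ add $\frac{f_i(S_{i.j+1})-f_i(S_{i.j-1})}{f_i(S_{i.|S|})-f_i(S_{i.1})}$ to $\mathrm{cDis}(S_{i.j})$. In the NSGA-II, $R_t=P_t\cup Q_t$ denotes the multiset union of the parent population $P_t$ and offspring population $Q_t$ in iteration $t$, each of size $N$. \textsc{OneMinMax}: $f(x)=(n-\sum_{i=1}^n x_i,\ \sum_{i=1}^n x_i)$; no bit string strictly dominates another, so all individuals of any population have rank one in non-dominated sorting. *)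

(* Defs.v *)
From HB Require Import structures.
From mathcomp Require Import all_boot all_order all_algebra.
From mathcomp Require Import constructive_ereal.
Set Implicit Arguments. Unset Strict Implicit. Unset Printing Implicit Defensive.
Import Order.TTheory GRing.Theory Num.Theory.

Definition bitstr (n : nat) := n.-tuple bool.

Definition f1 n (x : bitstr n) : nat := n - count id x.
Definition f2 n (x : bitstr n) : nat := count id x.
Definition fOMM n (x : bitstr n) : nat * nat := (f1 x, f2 x).

(* A population (multiset) of size M is an indexed family R : 'I_M -> bitstr n. *)

Definition v1max n M (R : 'I_M -> bitstr n) : nat := \max_(k < M) f1 (R k).
Definition v1min n M (R : 'I_M -> bitstr n) : nat :=
  \big[minn/v1max R]_(k < M) f1 (R k).

(* A sorting of the population in ascending g-value (ties broken arbitrarily):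
   a listing of all indices, each exactly once, nondecreasing in g. *)
Definition is_sort_by M (g : 'I_M -> nat) (s : seq 'I_M) : Prop :=
  perm_eq s (enum 'I_M) /\ sorted (fun a b => g a <= g b) s.

(* Contribution of objective g (with sorting s) to the crowding distance of
   individual k: +oo at the two ends of the sorted list, otherwise
   (g(S_{j+1}) - g(S_{j-1})) / (g(S_|S|) - g(S_1)). (0-based positions.) *)
Definition cd_part M (g : 'I_M -> nat) (s : seq 'I_M) (k : 'I_M) : \bar rat :=
  let j := index k s in
  if (j == 0%N) || (j == M.-1) then +oo%E
  else (((g (nth k s j.+1))%:R - (g (nth k s j.-1))%:R) /
        ((g (nth k s M.-1))%:R - (g (nth k s 0))%:R) : rat)%:E.

Definition cDis n M (R : 'I_M -> bitstr n) (s1 s2 : seq 'I_M) (k : 'I_M)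
  : \bar rat :=
  (cd_part (fun a => f1 (R a)) s1 k + cd_part (fun a => f2 (R a)) s2 k)%E.

Definition inVplus n M (R : 'I_M -> bitstr n) (v : nat * nat) : Prop :=
  exists y : 'I_M, f1 (R y) = v.1 + 1 /\ f2 (R y) + 1 = v.2.
Definition inVminus n M (R : 'I_M -> bitstr n) (v : nat * nat) : Prop :=
  exists y : 'I_M, f1 (R y) + 1 = v.1 /\ f2 (R y) = v.2 + 1.

(* Main.v *)
Require Import Defs.
From HB Require Import structures.
From mathcomp Require Import all_boot all_order all_algebra.
From mathcomp Require Import constructive_ereal.
From mathcomp Require Import zify.
From Stdlib Require Classical_Prop.
From mathcomp Require Import ring.
Import Order.TTheory GRing.Theory Num.Theory.

Lemma ratineq (A C D : nat) : (2 <= A)%N -> (A <= C)%N -> (C <= D)%N ->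
  ((2%:R / D%:R : rat) <= A%:R / C%:R)%R.
Proof.
move=> hA hAC hCD.
have C0 : (0 < C%:R :> rat)%R by rewrite ltr0n; lia.
have D0 : (0 < D%:R :> rat)%R by rewrite ltr0n; lia.
rewrite ler_pdivlMr // mulrAC ler_pdivrMr // -!natrM ler_nat.
nia.
Qed.

Lemma cd_ge0 M (g : 'I_M -> nat) s k : is_sort_by g s -> (0 <= cd_part g s k)%E.
Proof.
move=> [hp hs]; rewrite /cd_part.
have sz : size s = M by rewrite (perm_size hp) size_enum_ord.
have ks : k \in s by rewrite (perm_mem hp) mem_enum.
have jl : (index k s < size s)%N by rewrite index_mem.
case: ifP => [_|/norP[/eqP j0 /eqP j1]]; first exact: leey.
have tr : transitive (fun a b : 'I_M => (g a <= g b)%N) by move=> a b c; apply: leq_trans.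
have rf : reflexive (fun a b : 'I_M => (g a <= g b)%N) by move=> ?.
have H := sorted_leq_nth tr rf k hs.
rewrite lee_fin divr_ge0 // subr_ge0 ler_nat; apply: H; rewrite ?inE; lia.
Qed.

Lemma core M (g : 'I_M -> nat) s lo hi (k0 : 'I_M) :
  is_sort_by g s -> (forall y, lo <= g y <= hi)%N -> (lo < hi)%N ->
  ~ (exists y, g y = g k0 + 1) ->
  exists k, g k = g k0 /\
    (((2%:R / (hi%:R - lo%:R)) : rat)%:E <= cd_part g s k)%E.
Proof.
move=> [hp hs] hb hlh hno.
have sz : size s = M by rewrite (perm_size hp) size_enum_ord.
have us : uniq s by rewrite (perm_uniq hp) enum_uniq.
have k0s : k0 \in s by rewrite (perm_mem hp) mem_enum.
pose P j := (j < size s) && (g (nth k0 s j) == g k0).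
have exP : exists j, P j.
  by exists (index k0 s); rewrite /P index_mem k0s nth_index // eqxx.
have ubP : forall j, P j -> (j <= size s)%N by move=> j /andP[? _]; lia.
case: (ex_maxnP exP ubP) => j /andP[jl /eqP gj] jmax.
exists (nth k0 s j); split=> //.
rewrite /cd_part index_uniq //.
case: ifP => [_|/norP[/eqP j0 /eqP j1]]; first exact: leey.
have tr : transitive (fun a b : 'I_M => (g a <= g b)%N) by move=> a b c; apply: leq_trans.
have rf : reflexive (fun a b : 'I_M => (g a <= g b)%N) by move=> ?.
have H := sorted_leq_nth tr rf k0 hs.
have e1 : nth (nth k0 s j) s j.+1 = nth k0 s j.+1 by apply: set_nth_default; lia.
have e2 : nth (nth k0 s j) s j.-1 = nth k0 s j.-1 by apply: set_nth_default; lia.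
have e3 : nth (nth k0 s j) s M.-1 = nth k0 s M.-1 by apply: set_nth_default; lia.
have e4 : nth (nth k0 s j) s 0 = nth k0 s 0 by apply: set_nth_default; lia.
rewrite e1 e2 e3 e4.
have ha1 : (g k0 <= g (nth k0 s j.+1))%N by rewrite -gj; apply: H; rewrite ?inE; lia.
have ha2 : g (nth k0 s j.+1) != g k0.
  apply/negP => /eqP e; have := jmax j.+1; rewrite /P e eqxx andbT.
  have -> : (j.+1 < size s)%N by lia.
  move=> /(_ isT); lia.
have ha3 : g (nth k0 s j.+1) <> g k0 + 1 by move=> e; apply: hno; exists (nth k0 s j.+1).
have hbb : (g (nth k0 s j.-1) <= g k0)%N by rewrite -gj; apply: H; rewrite ?inE; lia.
have hd : (g (nth k0 s 0) <= g (nth k0 s j.-1))%N by apply: H; rewrite ?inE; lia.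
have hc : (g (nth k0 s j.+1) <= g (nth k0 s M.-1))%N by apply: H; rewrite ?inE; lia.
have hl := hb (nth k0 s 0); have hh := hb (nth k0 s M.-1).
have hab : (g (nth k0 s j.-1) <= g (nth k0 s j.+1))%N by lia.
have hcd : (g (nth k0 s 0) <= g (nth k0 s M.-1))%N by lia.
rewrite lee_fin -(natrB _ hab) -(natrB _ hcd) -(natrB _ (ltnW hlh)).
apply: ratineq; move/eqP: ha2 => ha2; lia.
Qed.

Lemma f12 n (x : bitstr n) : (f1 x <= n)%N /\ f2 x = n - f1 x.
Proof.
have := count_size id x; rewrite size_tuple /f1 /f2 => h; split; lia.
Qed.

Lemma vbounds n M (R : 'I_M -> bitstr n) (y : 'I_M) :
  (v1min R <= f1 (R y) <= v1max R)%N /\ (v1max R <= n)%N.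
Proof.
split; last by apply/bigmax_leqP => i _; case: (@f12 n (R i)).
apply/andP; split.
  rewrite /v1min; have : y \in index_enum 'I_M by rewrite mem_index_enum.
  elim: (index_enum _) => [//|a r IH]; rewrite big_cons inE => /orP[/eqP<-|/IH h].
    exact: geq_minl.
  exact: leq_trans (geq_minr _ _) h.
rewrite /v1max; exact: (@leq_bigmax _ (fun k => f1 (R k)) y).
Qed.

Arguments f12 {n}.
Arguments core {M g s lo hi k0}.
Arguments cd_ge0 {M g s}.
Arguments vbounds {n M}.

Theorem lemma3 (n N : nat) (R : 'I_(2 * N) -> bitstr n)
    (s1 s2 : seq 'I_(2 * N)) :
  is_sort_by (fun a => f1 (R a)) s1 ->
  is_sort_by (fun a => f2 (R a)) s2 ->
  (v1min R < v1max R)%N ->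
  forall k0 : 'I_(2 * N),
    ~ (inVplus R (fOMM (R k0)) /\ inVminus R (fOMM (R k0))) ->
    exists k : 'I_(2 * N),
      fOMM (R k) = fOMM (R k0) /\
      (((2%:R / ((v1max R)%:R - (v1min R)%:R)) : rat)%:E <= cDis R s1 s2 k)%E.
Proof.
move=> h1 h2 hlt k0 hnot.
have vb := vbounds R.
have F := fun y => f12 (R y).
case: (Classical_Prop.not_and_or _ _ hnot) => hn.
- have hb : forall y, (v1min R <= f1 (R y) <= v1max R)%N by move=> y; case: (vb y).
  have hno : ~ (exists y, f1 (R y) = f1 (R k0) + 1).
    move=> [y hy]; apply: hn; exists y; rewrite /fOMM /=.
    case: (F y) => ? ->; case: (F k0) => ? ->; lia.
  have [k [gk hk]] := core h1 hb hlt hno.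
  exists k; split.
    rewrite /fOMM; case: (F k) => _ ->; case: (F k0) => _ ->; by rewrite gk.
  rewrite /cDis; apply: lee_paddr; [exact: (cd_ge0 k h2) | exact: hk].
- have vn : (v1max R <= n)%N by case: (vb k0).
  have hb : forall y, (n - v1max R <= f2 (R y) <= n - v1min R)%N.
    move=> y; case: (vb y) => /andP[? ?] _; case: (F y) => _ ->; apply/andP; split; lia.
  have hlt' : (n - v1max R < n - v1min R)%N by lia.
  have hno : ~ (exists y, f2 (R y) = f2 (R k0) + 1).
    move=> [y hy]; apply: hn; exists y; rewrite /fOMM /=; split=> //.
    move: hy; case: (F y) => ? ->; case: (F k0) => ? ->; lia.
  have [k [gk hk]] := core h2 hb hlt' hno.
  exists k; split.
    rewrite /fOMM; case: (F k) => ? e1; case: (F k0) => ? e2.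
    rewrite gk; congr pair; lia.
  have -> : (((v1max R)%:R - (v1min R)%:R)%R : rat) = ((n - v1min R)%:R - (n - v1max R)%:R)%R.
    rewrite !natrB //; last by apply: leq_trans (ltnW hlt) vn.
    ring.
  rewrite /cDis; apply: lee_paddl; [exact: cd_ge0 | exact: hk].
Qed.
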